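(* Let $(\mathcal G_A,p^A)$ and $(\mathcal G_B,p^B)$ be CPS's on the finite set $\Omega$ (satisfying the standing assumptions), each satisfying certainty reflection and being $1$-closed. Fix an event $E$ and a state $\omega$ with $\omega\in E$. If $E$ is common certainty at $\omega$ (i.e., $\omega\in C^\infty$ computed with $q_A=q_B=1$), then $E$ is common knowledge at $\omega$ (i.e., $\omega\in K^\infty$ computed with $q_A=q_B=1$).
   Context: $\Omega$ is a finite set; every subset is an event. A CPS is a pair $(\mathcal G,p)$ where $\mathcal G$ is a family of nonempty subsets of $\Omega$ and $p$ assigns to each $G\in\mathcal G$ a probability measure $p_G$ on $\Omega$ with $p_G(G)=1$ and $p_G(E)=p_G(F)p_F(E)$ whenever $E\subseteq F\subseteq G$, $F,G\in\mathcal G$. Standing assumption: each conditioning family is closed under unions and nonempty intersections and covers $\Omega$. Atom: $m_i(\omega)=\bigcap\{G\in\mathcal G_i:\omega\in G\}$. $(\mathcal G_i,p^i)$ is $1$-closed if every $L\subseteq G$ with $G\in\mathcal G_i$ and $p^i_G(L)=1$ belongs to $\mathcal G_i$. Certainty reflection: for every event $E$, $q\in[0,1]$, $\omega$: $p^i_{m_i(\omega)}(E)=q$ implies $p^i_{m_i(\omega)}(\{\omega':p^i_{m_i(\omega')}(E)=q\})=1$. $C_i(F)=\{\omega:p^i_{m_i(\omega)}(F)=1\}$ and $K_i(F)=\{\omega: m_i(\omega)\subseteq F\}$. With $q_A=q_B=1$: $A^0=\{\omega:p^A_{m_A(\omega)}(E)=1\}$, $B^0=\{\omega:p^B_{m_B(\omega)}(E)=1\}$;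 $A^{n+1}=A^n\cap C_A(B^n)$, $B^{n+1}=B^n\cap C_B(A^n)$, $C^\infty=\bigcap_nA^n\cap\bigcap_nB^n$; and $A^{K,0}=A^0$, $B^{K,0}=B^0$, $A^{K,n+1}=A^{K,n}\cap K_A(B^{K,n})$, $B^{K,n+1}=B^{K,n}\cap K_B(A^{K,n})$, $K^\infty=\bigcap_nA^{K,n}\cap\bigcap_nB^{K,n}$. *)

(* Defs.v *)
From HB Require Import structures.
From mathcomp Require Import all_boot all_order all_algebra.
Set Implicit Arguments. Unset Strict Implicit. Unset Printing Implicit Defensive.
Import Order.TTheory GRing.Theory Num.Theory.
Local Open Scope ring_scope.

Section CPSDefs.
Variables (R : realFieldType) (T : finType).

(* A family of conditional probability measures: p G is the point-mass
   function of the measure p_G (only meaningful for G in the family). *)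
Definition prob (p : {set T} -> {ffun T -> R}) (G E : {set T}) : R :=
  \sum_(x in E) p G x.

Record is_CPS (fam : {set {set T}}) (p : {set T} -> {ffun T -> R}) : Prop := {
  cps_nonempty : forall G, G \in fam -> G != set0;
  cps_nonneg : forall G, G \in fam -> forall x, 0 <= p G x;
  cps_total : forall G, G \in fam -> \sum_(x : T) p G x = 1;
  cps_support : forall G, G \in fam -> prob p G G = 1;
  cps_chain : forall E F G : {set T}, F \in fam -> G \in fam -> E \subset F -> F \subset G ->
          prob p G E = prob p G F * prob p F E;
  (* standing assumptions *)
  cps_union : forall F G, F \in fam -> G \in fam -> F :|: G \in fam;
  cps_inter : forall F G, F \in fam -> G \in fam -> F :&: G != set0 -> F :&: G \in fam;
  cps_cover : forall w, exists2 G, G \in fam & w \in G }.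

Definition atom (fam : {set {set T}}) (w : T) : {set T} :=
  \bigcap_(G in fam | w \in G) G.

Definition one_closed (fam : {set {set T}}) (p : {set T} -> {ffun T -> R}) : Prop :=
  forall G L : {set T}, G \in fam -> L \subset G -> prob p G L = 1 -> L \in fam.

Definition certainty_reflection (fam : {set {set T}}) (p : {set T} -> {ffun T -> R}) : Prop :=
  forall (E : {set T}) (q : R) (w : T),
    prob p (atom fam w) E = q ->
    prob p (atom fam w) [set w' | prob p (atom fam w') E == q] = 1.

Definition Cert (fam : {set {set T}}) (p : {set T} -> {ffun T -> R}) (F : {set T}) : {set T} :=
  [set w | prob p (atom fam w) F == 1].

Definition Know (fam : {set {set T}}) (F : {set T}) : {set T} :=
  [set w | atom fam w \subset F].

Fixpoint iter_pair (opA opB : {set T} -> {set T}) (A0 B0 : {set T}) (n : nat)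
  : {set T} * {set T} :=
  match n with
  | 0%N => (A0, B0)
  | k.+1 => let: (a, b) := iter_pair opA opB A0 B0 k in
            (a :&: opA b, b :&: opB a)
  end.

Definition certain_set (fam : {set {set T}}) (p : {set T} -> {ffun T -> R}) (E : {set T}) :=
  Cert fam p E.

Definition common_certainty famA pA famB pB (E : {set T}) (w : T) : Prop :=
  forall n, let AB := iter_pair (Cert famA pA) (Cert famB pB)
                        (certain_set famA pA E) (certain_set famB pB E) n in
            w \in AB.1 /\ w \in AB.2.

(* w ∈ K^∞ for E with q_A = q_B = 1 (A^{K,0} = A^0, B^{K,0} = B^0) *)
Definition common_knowledge famA pA famB pB (E : {set T}) (w : T) : Prop :=
  forall n, let AB := iter_pair (Know famA) (Know famB)
                        (certain_set famA pA E) (certain_set famB pB E) n in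
            w \in AB.1 /\ w \in AB.2.

End CPSDefs.

(* Main.v *)
Require Import Defs.
From mathcomp Require Import all_boot all_order all_algebra.
Import Order.TTheory GRing.Theory Num.Theory.
Local Open Scope ring_scope.

Section Aux.
Variables (R : realFieldType) (T : finType).
Variables (fam : {set {set T}}) (p : {set T} -> {ffun T -> R}).
Hypothesis (Hc : is_CPS fam p) (H1 : one_closed fam p)
  (Hr : certainty_reflection fam p).

Lemma zero_out G y : G \in fam -> y \notin G -> p G y = 0.
Proof.
move=> HG Hy.
have Ht := cps_total Hc HG.
rewrite (bigID (mem G)) /= in Ht.
have := cps_support Hc HG; rewrite /prob => Hs.
have E0 : \sum_(i | ~~ (i \in G)) p G i = 0.
  move: Ht; rewrite Hs => /eqP; rewrite -subr_eq0 addrC addrK => /eqP.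
  by [].
apply: (psumr_eq0P _ E0) => // i _; exact: (cps_nonneg Hc HG).
Qed.

Lemma atom_in x : atom fam x \in fam /\ x \in atom fam x.
Proof.
have [G HG xG] := cps_cover Hc x.
pose K := fun S : {set T} => x \in S /\ (S = setT \/ S \in fam).
have : K (atom fam x).
  rewrite /atom; apply: (big_ind K); rewrite /K.
  - by split; [rewrite inE | left].
  - move=> S1 S2 [x1 o1] [x2 o2]; split; first by rewrite inE x1 x2.
    case: o1 o2 => [->|f1] [->|f2].
    + by left; rewrite setIT.
    + by right; rewrite setTI.
    + by right; rewrite setIT.
    + right; apply: (cps_inter Hc f1 f2).
      by apply/set0Pn; exists x; rewrite inE x1 x2.
  - by move=> i /andP [Hi xi]; split => //; right.
move=> [xa [EA|fa]]; last by split.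
have sub : atom fam x \subset G by apply: bigcap_inf; rewrite HG xG.
rewrite EA in sub; have GT : G = setT by apply/eqP; rewrite eqEsubset subsetT.
by rewrite EA -GT; split.
Qed.

Lemma L1 x (F : {set T}) : x \in F -> prob p (atom fam x) F = 1 -> atom fam x \subset F.
Proof.
move=> xF HP.
have [Ha xa] := atom_in x.
set G := atom fam x in Ha xa HP *.
have HL : prob p G (F :&: G) = 1.
  rewrite -HP /prob [in RHS](big_setID G) /= [X in _ + X]big1 ?addr0 //.
  by move=> i; rewrite inE => /andP [Hi _]; apply: zero_out.
have LF : F :&: G \in fam by apply: H1 Ha _ HL; apply: subsetIr.
apply: (subset_trans _ (subsetIl F G)).
by apply: bigcap_inf; rewrite LF inE xF xa.
Qed.

Lemma L2 x (F : {set T}) : x \in Cert fam p F -> atom fam x \subset Cert fam p F.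
Proof.
move=> Hx; apply: L1; first exact: Hx.
have := Hx; rewrite inE => /eqP H.
have := Hr _ _ _ H; rewrite /Cert; exact.
Qed.

End Aux.

Lemma iter_pairS (T : finType) (opA opB : {set T} -> {set T}) A0 B0 n :
  iter_pair opA opB A0 B0 n.+1 =
  ((iter_pair opA opB A0 B0 n).1 :&: opA (iter_pair opA opB A0 B0 n).2,
   (iter_pair opA opB A0 B0 n).2 :&: opB (iter_pair opA opB A0 B0 n).1).
Proof. by rewrite /=; case: iter_pair. Qed.

Theorem theorem4 (R : realFieldType) (T : finType)
  (famA famB : {set {set T}}) (pA pB : {set T} -> {ffun T -> R})
  (E : {set T}) (w : T) :
  is_CPS famA pA -> is_CPS famB pB ->
  certainty_reflection famA pA -> certainty_reflection famB pB ->
  one_closed famA pA -> one_closed famB pB ->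
  w \in E ->
  common_certainty famA pA famB pB E w ->
  common_knowledge famA pA famB pB E w.
Proof.
move=> cA cB rA rB oA oB _ Hw.
set IC := iter_pair (Cert famA pA) (Cert famB pB)
   (certain_set famA pA E) (certain_set famB pB E).
set D := fun x => forall n, x \in (IC n).1 /\ x \in (IC n).2.
have intro : forall n x,
   (x \in (IC n).1 -> atom famA x \subset (IC n).1) /\
   (x \in (IC n).2 -> atom famB x \subset (IC n).2).
  elim=> [|n IH] x.
    by split => /= H; apply: L2.
  rewrite /IC iter_pairS -/IC /=; split; rewrite inE => /andP [H1 H2];
    rewrite subsetI.
    by rewrite (proj1 (IH x) H1) (@L2 _ _ _ _ cA oA rA _ _ H2).
  by rewrite (proj2 (IH x) H1) (@L2 _ _ _ _ cB oB rB _ _ H2).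
have key : forall x, D x ->
   (forall y, y \in atom famA x -> D y) /\ (forall y, y \in atom famB x -> D y).
  move=> x Dx; split => y Hy n.
    have [a1 _] := Dx n.+1; move: a1.
    rewrite /IC iter_pairS -/IC inE => /andP [a c].
    have [_ b] := Dx n.
    split; first by apply: (subsetP (proj1 (intro n x) a)).
    apply: (subsetP (@L1 _ _ _ _ cA oA _ _ b _)) => //.
    by move: c; rewrite inE => /eqP.
  have [_ b1] := Dx n.+1; move: b1.
  rewrite /IC iter_pairS -/IC inE => /andP [b c].
  have [a _] := Dx n.
  split; last by apply: (subsetP (proj2 (intro n x) b)).
  apply: (subsetP (@L1 _ _ _ _ cB oB _ _ a _)) => //.
  by move: c; rewrite inE => /eqP.
have main : forall n x, D x ->
  x \in (iter_pair (Know famA) (Know famB)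
     (certain_set famA pA E) (certain_set famB pB E) n).1 /\
  x \in (iter_pair (Know famA) (Know famB)
     (certain_set famA pA E) (certain_set famB pB E) n).2.
  elim=> [|n IH] x Dx.
    by have := Dx 0%N.
  rewrite iter_pairS /= !inE.
  have [a b] := IH x Dx.
  rewrite a b /=; split.
    by apply/subsetP => y Hy; apply: (proj2 (IH y ((proj1 (key x Dx)) y Hy))).
  by apply/subsetP => y Hy; apply: (proj1 (IH y ((proj2 (key x Dx)) y Hy))).
move=> n; exact: main n w Hw.
Qed.
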